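(* Let $\mathcal{S}$ be finite, $\Pi$ irreducible stochastic on $\mathcal{S}$, $\kappa(x,y):=\pi_{xy}-\mathbf{1}_{x=y}$, $\mathcal{K}=\Pi-\mathrm{I}$, $Q=(q(y))$ the invariant distribution, and assume detailed balance $q(y)\kappa(y,z)=q(z)\kappa(z,y)$ for all $y,z$. Let $\Phi:(0,\infty)\to\mathbb{R}$ be convex, continuously differentiable with continuous strictly positive second derivative, $\Phi(1)=0$, $\varphi:=\Phi'$. Let $\boldsymbol{\ell}_t=\ell(t,\cdot)$, $\ell(t,y):=p(t,y)/q(y)$, where $p(t,\cdot)$ is the time-$t$ law of the chain with generator $\mathcal{K}$ started from a positive initial distribution. Fix $t_0>0$, put $\boldsymbol{\ell}:=\boldsymbol{\ell}_{t_0}$, and let $(\psi_t)_{t_0\le t<t_0+\varepsilon}$ be continuous and $(\ell^\psi_t)$ positive with $\ell^\psi_{t_0}=\boldsymbol{\ell}_{t_0}$ and $\partial_t\ell^\psi_t+\nabla\cdot(\vartheta_{\boldsymbol{\ell}_t}\nabla\psi_t)=0$. Then $$\lim_{h\downarrow0}\frac1h\big\|\boldsymbol{\ell}_{t_0+h}-\boldsymbol{\ell}_{t_0}\big\|_{\mathbb{H}^{-1}_\Theta(\mathcal{S},\boldsymbol{\ell}Q)}=\big\|\mathcal{K}\boldsymbol{\ell}_{t_0}\big\|_{\mathbb{H}^{-1}_\Theta(\mathcal{S},\boldsymbol{\ell}Q)}=\big\|\varphi(\boldsymbol{\ell}_{t_0})\big\|_{\mathbb{H}^1_\Theta(\mathcal{S},\boldsymbol{\ell}Q)},$$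 and $$\lim_{h\downarrow0}\frac1h\big\|\ell^\psi_{t_0+h}-\ell^\psi_{t_0}\big\|_{\mathbb{H}^{-1}_\Theta(\mathcal{S},\boldsymbol{\ell}Q)}=\big\|\nabla\cdot(\vartheta_{\boldsymbol{\ell}_{t_0}}\nabla\psi_{t_0})\big\|_{\mathbb{H}^{-1}_\Theta(\mathcal{S},\boldsymbol{\ell}Q)}=\big\|\psi_{t_0}\big\|_{\mathbb{H}^1_\Theta(\mathcal{S},\boldsymbol{\ell}Q)} .$$
   Context: $\mathcal{Z}:=\{(x,y):\kappa(x,y)>0\}$, $c(x,y):=\frac12\kappa(x,y)q(x)$, $\nabla f(x,y):=f(y)-f(x)$, $(\nabla\cdot F)(x):=\frac12\sum_{y\neq x}\kappa(x,y)[F(x,y)-F(y,x)]$. $\Theta^\Phi(a,b):=\frac{a-b}{\varphi(a)-\varphi(b)}$ for $a\ne b$, $\Theta^\Phi(b,b):=1/\Phi''(b)$; for positive $\ell$, $\vartheta_\ell(x,y):=\Theta^\Phi(\ell(x),\ell(y))$. $\|f\|^2_{\mathbb{H}^1_\Theta(\mathcal{S},\ell Q)}:=\sum_{(x,y)\in\mathcal{Z}}c(x,y)\vartheta_\ell(x,y)(\nabla f(x,y))^2$, and $\|f\|_{\mathbb{H}^{-1}_\Theta(\mathcal{S},\ell Q)}:=\sup_{g:\mathcal{S}\to\mathbb{R}}\frac{\sum_xq(x)f(x)g(x)}{\|g\|_{\mathbb{H}^1_\Theta(\mathcal{S},\ell Q)}}$. *)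

(* Defs.v *)
From HB Require Import structures.
From mathcomp Require Import all_boot all_order all_algebra.
From mathcomp Require Import all_classical all_reals all_analysis.
Set Implicit Arguments. Unset Strict Implicit. Unset Printing Implicit Defensive.
Import Order.TTheory GRing.Theory Num.Theory.
Import numFieldNormedType.Exports.
Local Open Scope classical_set_scope.
Local Open Scope ring_scope.

Section Defs.
Variables (R : realType) (S : finType).

Definition kappa (Pi : S -> S -> R) (x y : S) : R := Pi x y - (x == y)%:R.

Definition Kop (Pi : S -> S -> R) (f : S -> R) (x : S) : R :=
  \sum_(y : S) kappa Pi x y * f y.

Definition phiP (Phi : R -> R) : R -> R := derive1 Phi.
Definition Phi2 (Phi : R -> R) : R -> R := derive1 (derive1 Phi).

Definition ThetaP (Phi : R -> R) (a b : R) : R :=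
  if a == b then (Phi2 Phi b)^-1 else (a - b) / (phiP Phi a - phiP Phi b).

Definition vartheta (Phi : R -> R) (l : S -> R) (x y : S) : R :=
  ThetaP Phi (l x) (l y).

Definition grad (f : S -> R) (x y : S) : R := f y - f x.

Definition divg (Pi : S -> S -> R) (F : S -> S -> R) (x : S) : R :=
  2^-1 * \sum_(y : S | y != x) kappa Pi x y * (F x y - F y x).

Definition cw (Pi : S -> S -> R) (q : S -> R) (x y : S) : R :=
  2^-1 * kappa Pi x y * q x.

Definition H1sq (Pi : S -> S -> R) (q : S -> R) (Phi : R -> R) (l f : S -> R) : R :=
  \sum_(x : S) \sum_(y : S | 0 < kappa Pi x y)
     cw Pi q x y * vartheta Phi l x y * (grad f x y) ^+ 2.

Definition H1norm Pi q Phi l f : R := Num.sqrt (H1sq Pi q Phi l f).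

Definition Hm1norm (Pi : S -> S -> R) (q : S -> R) (Phi : R -> R) (l f : S -> R)
  : \bar R :=
  ereal_sup (range (fun g : S -> R =>
     ((\sum_(x : S) q x * f x * g x) / H1norm Pi q Phi l g)%:E)).

End Defs.

(* Main.v *)
Require Import Defs.
From HB Require Import structures.
From mathcomp Require Import all_boot all_order all_algebra.
From mathcomp Require Import all_classical all_reals all_analysis.
Import Order.TTheory GRing.Theory Num.Theory.
Import numFieldNormedType.Exports.
Local Open Scope classical_set_scope.
Local Open Scope ring_scope.
From mathcomp Require Import ring lra.

Lemma le_sum_term (R : realType) (I : finType) (P : pred I) (F : I -> R) i :
  P i -> (forall j, P j -> 0 <= F j) -> F i <= \sum_(j | P j) F j.
Proof.
move=> Pi F0; rewrite (bigD1 i) //= lerDl sumr_ge0 // => j /andP[Pj _]; exact: F0.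
Qed.

Lemma le_sum_all (R : realType) (I : finType) (F : I -> R) i :
  (forall j, 0 <= F j) -> F i <= \sum_j F j.
Proof.
move=> F0; rewrite (bigD1 i) //= lerDl sumr_ge0 // => j _; exact: F0.
Qed.

Section Alg.
Variables (R : realType) (S : finType) (Pi : S -> S -> R) (q : S -> R).
Hypothesis Pi_ge0 : forall x y, 0 <= Pi x y.
Hypothesis Pi_sum : forall x, \sum_(y : S) Pi x y = 1.
Hypothesis q_ge0 : forall y, 0 <= q y.
Hypothesis db : forall y z, q y * kappa Pi y z = q z * kappa Pi z y.

Definition Bf (th : S -> S -> R) (u g : S -> R) : R :=
  \sum_(x : S) \sum_(y : S | 0 < kappa Pi x y)
     cw Pi q x y * th x y * (grad u x y * grad g x y).

Lemma kappa_sum x : \sum_(y : S) kappa Pi x y = 0.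
Proof.
rewrite /kappa sumrB Pi_sum (bigD1 x) //= eqxx big1 ?addr0 ?subrr //.
by move=> y; rewrite eq_sym => /negbTE ->.
Qed.

Lemma kappa_off x y : x != y -> kappa Pi x y = Pi x y.
Proof. by rewrite /kappa => /negbTE ->; rewrite subr0. Qed.

Lemma Bf_full th u g : Bf th u g =
  \sum_(x : S) \sum_(y : S) cw Pi q x y * th x y * (grad u x y * grad g x y).
Proof.
apply: eq_bigr => x _; rewrite [in RHS](bigID (fun y => 0 < kappa Pi x y)) /=.
rewrite [X in _ = _ + X]big1 ?addr0 // => y.
case: (eqVneq x y) => [<-|xy]; first by rewrite /grad subrr !mul0r mulr0.
rewrite kappa_off // lt_def Pi_ge0 andbT negbK => /eqP P0.
by rewrite /cw /kappa (negbTE xy) P0 subrr mulr0 !mul0r.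
Qed.

Lemma key th u g : (forall x y, th x y = th y x) ->
  \sum_(x : S) q x * g x * (\sum_(y : S) kappa Pi x y * (th x y * grad u x y))
  = - Bf th u g.
Proof.
move=> ths.
pose A x y := q x * kappa Pi x y * (th x y * grad u x y).
have Aa x y : A y x = - A x y.
  rewrite /A db ths /grad; ring.
have -> : \sum_(x : S) q x * g x * (\sum_(y : S) kappa Pi x y * (th x y * grad u x y))
   = \sum_(x : S) \sum_(y : S) A x y * g x.
  apply: eq_bigr => x _; rewrite mulr_sumr; apply: eq_bigr => y _; rewrite /A; ring.
have T2 : \sum_(x : S) \sum_(y : S) A x y * g y = - \sum_(x : S) \sum_(y : S) A x y * g x.
  rewrite exchange_big /= -sumrN; apply: eq_bigr => x _; rewrite -sumrN.
  by apply: eq_bigr => y _; rewrite Aa mulNr.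
have -> : Bf th u g = 2^-1 * \sum_(x : S) \sum_(y : S) A x y * (g y - g x).
  rewrite Bf_full mulr_sumr; apply: eq_bigr => x _; rewrite mulr_sumr.
  by apply: eq_bigr => y _; rewrite /A /cw /grad; ring.
have -> : \sum_(x : S) \sum_(y : S) A x y * (g y - g x) =
   \sum_(x : S) \sum_(y : S) A x y * g y - \sum_(x : S) \sum_(y : S) A x y * g x.
  rewrite -sumrB; apply: eq_bigr => x _; rewrite -sumrB; apply: eq_bigr => y _; ring.
rewrite T2; set X := \sum_(x : S) _; by field.
Qed.


Lemma Bf_ge0 th u : (forall x y, 0 < kappa Pi x y -> 0 <= th x y) -> 0 <= Bf th u u.
Proof.
move=> thn; apply: sumr_ge0 => x _; apply: sumr_ge0 => y kp.
apply: mulr_ge0; last by rewrite -expr2 sqr_ge0.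
apply: mulr_ge0; last exact: thn.
by rewrite /cw !mulr_ge0 ?invr_ge0 ?ler0n // ltW.
Qed.

Lemma Bf_quad th u g s :
  Bf th (fun z => u z + s * g z) (fun z => u z + s * g z)
  = Bf th u u + 2 * s * Bf th u g + s ^+ 2 * Bf th g g.
Proof.
rewrite /Bf !mulr_sumr -!big_split; apply: eq_bigr => x _.
rewrite !mulr_sumr -!big_split; apply: eq_bigr => y _ /=; rewrite /grad; ring.
Qed.

Lemma Bf_CS th u g : (forall x y, 0 < kappa Pi x y -> 0 <= th x y) ->
  0 < Bf th g g -> Bf th u g ^+ 2 <= Bf th u u * Bf th g g.
Proof.
move=> thn gp.
set s := - Bf th u g / Bf th g g.
have := Bf_ge0 th (fun z => u z + s * g z) thn; rewrite Bf_quad.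
have e : Bf th g g * (Bf th u u + 2 * s * Bf th u g + s ^+ 2 * Bf th g g)
   = Bf th u u * Bf th g g - Bf th u g ^+ 2.
  rewrite /s; field; exact: lt0r_neq0.
move=> h; have := mulr_ge0 (ltW gp) h; rewrite e subr_ge0 //.
Qed.

Lemma ratio_le th u g : (forall x y, 0 < kappa Pi x y -> 0 <= th x y) ->
  Bf th u g / Num.sqrt (Bf th g g) <= Num.sqrt (Bf th u u).
Proof.
move=> thn.
have [g0|gp] := eqVneq (Bf th g g) 0.
  by rewrite g0 sqrtr0 invr0 mulr0 sqrtr_ge0.
have gpos : 0 < Bf th g g by rewrite lt_def gp Bf_ge0.
have sp : 0 < Num.sqrt (Bf th g g) by rewrite sqrtr_gt0.
rewrite ler_pdivrMr // -sqrtrM ?Bf_ge0 //.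
apply: le_trans (ler_norm _) _.
rewrite -sqrtr_sqr; apply: ler_wsqrtr; exact: Bf_CS.
Qed.

Lemma ratio_self th u : (forall x y, 0 < kappa Pi x y -> 0 <= th x y) ->
  Bf th u u / Num.sqrt (Bf th u u) = Num.sqrt (Bf th u u).
Proof.
move=> thn.
have [u0|up] := eqVneq (Num.sqrt (Bf th u u)) 0.
  by rewrite u0 invr0 mulr0.
by rewrite -{1}(sqr_sqrtr (Bf_ge0 th u thn)) expr2 mulfK.
Qed.

Lemma H1sqE Phi l g : H1sq Pi q Phi l g = Bf (vartheta Phi l) g g.
Proof. by apply: eq_bigr => x _; apply: eq_bigr => y _; rewrite expr2. Qed.

Lemma Hm1_eq Phi l f u :
  (forall x y, 0 < kappa Pi x y -> 0 <= vartheta Phi l x y) ->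
  (forall g, \sum_(x : S) q x * f x * g x = Bf (vartheta Phi l) u g) ->
  Hm1norm Pi q Phi l f = (H1norm Pi q Phi l u)%:E.
Proof.
move=> thn Hf; apply/le_anti/andP; split.
  apply: ge_ereal_sup => _ [g _ <-]; rewrite lee_fin /H1norm Hf !H1sqE.
  exact: ratio_le.
apply: ereal_sup_ubound; exists u => //.
by rewrite /H1norm Hf !H1sqE ratio_self.
Qed.

End Alg.
Arguments Bf {R S} Pi q th u g.
Arguments kappa_off {R S} Pi x y.
Arguments Bf_ge0 {R S} Pi q q_ge0 th u.

Section Poinc.
Variables (R : realType) (S : finType) (Pi : S -> S -> R) (q : S -> R).
Hypothesis Pi_ge0 : forall x y, 0 <= Pi x y.
Hypothesis q_pos : forall y, 0 < q y.
Hypothesis irr : forall x y, connect (fun a b => 0 < Pi a b) x y.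

Lemma poinc th : (forall x y, 0 < kappa Pi x y -> 0 < th x y) ->
  exists2 M, 0 <= M & forall g x y, `|g y - g x| <= M * Num.sqrt (Bf Pi q th g g).
Proof.
move=> thp.
have q_ge0 y : 0 <= q y by exact: ltW.
pose K := \sum_(a : S) \sum_(b : S | 0 < kappa Pi a b) Num.sqrt ((cw Pi q a b * th a b)^-1).
have K0 : 0 <= K by apply: sumr_ge0 => a _; apply: sumr_ge0 => b _; exact: sqrtr_ge0.
have edge g a b : 0 < kappa Pi a b -> `|g b - g a| <= K * Num.sqrt (Bf Pi q th g g).
  move=> kp.
  have wp : 0 < cw Pi q a b * th a b.
    by rewrite /cw !mulr_gt0 ?invr_gt0 ?ltr0n ?q_pos ?thp.
  have -> : `|g b - g a| = Num.sqrt ((cw Pi q a b * th a b)^-1) *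
        Num.sqrt (cw Pi q a b * th a b * (grad g a b * grad g a b)).
    rewrite -sqrtrM ?invr_ge0 ?ltW // mulKf ?gt_eqF //.
    by rewrite -expr2 sqrtr_sqr.
  apply: ler_pM; rewrite ?sqrtr_ge0 //.
    apply: (le_trans _ (@le_sum_all R S (fun a => \sum_(b : S | 0 < kappa Pi a b) Num.sqrt ((cw Pi q a b * th a b)^-1)) a _)).
      by apply: le_sum_term => // j _; exact: sqrtr_ge0.
    by move=> j; apply: sumr_ge0 => c _; exact: sqrtr_ge0.
  apply: ler_wsqrtr.
  have tnn x y : 0 < kappa Pi x y -> 0 <= cw Pi q x y * th x y * (grad g x y * grad g x y).
    move=> kxy; rewrite -expr2 mulr_ge0 ?sqr_ge0 // mulr_ge0 ?(ltW (thp _ _ kxy)) //.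
    by rewrite /cw !mulr_ge0 ?invr_ge0 ?ler0n // ltW.
  apply: (le_trans _ (@le_sum_all R S (fun a => \sum_(b : S | 0 < kappa Pi a b) cw Pi q a b * th a b * (grad g a b * grad g a b)) a _)).
    by apply: le_sum_term => // j; exact: tnn.
  by move=> j; apply: sumr_ge0 => c; exact: tnn.
exists (#|S|%:R * K); first by rewrite mulr_ge0.
move=> g x y.
set B := Num.sqrt (Bf Pi q th g g).
have pth : forall s x, path (fun a b => 0 < Pi a b) x s ->
    `|g (last x s) - g x| <= (size s)%:R * (K * B).
  elim => [|z s IH] x0 /=; first by rewrite subrr normr0 mul0r.
  move=> /andP[e ps].
  have := IH z ps.
  have ed : `|g z - g x0| <= K * B.
    case: (eqVneq x0 z) => [->|xz]; first by rewrite subrr normr0 mulr_ge0 ?sqrtr_ge0.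
    by apply: edge; rewrite kappa_off.
  move=> h; rewrite -(subrK (g z) (g (last z s))) -addrA.
  apply: le_trans (ler_normD _ _) _.
  by rewrite -[(size s).+1]addn1 natrD mulrDl mul1r; apply: lerD.
have /connectP [s ps ->] := irr x y.
case: (shortenP ps) => s' ps' us' _.
apply: le_trans (pth _ _ ps') _.
rewrite mulrA ler_wpM2r ?mulr_ge0 ?sqrtr_ge0 // ler_wpM2r // ler_nat.
move/card_uniqP: us' => us'.
have := max_card (mem (x :: s')); rewrite us' /=.
by move/ltnW.
Qed.

Lemma ratio_bound th M f g (x0 : S) : 0 <= M ->
  (forall x y, `|g y - g x| <= M * Num.sqrt (Bf Pi q th g g)) ->
  (forall x, q x <= 1) ->
  \sum_(x : S) q x * f x = 0 ->
  (\sum_(x : S) q x * f x * g x) / Num.sqrt (Bf Pi q th g g) <= M * \sum_(x : S) `|f x|.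
Proof.
move=> M0 Hg q1 f0.
set B := Num.sqrt (Bf Pi q th g g).
have B0 : 0 <= B by exact: sqrtr_ge0.
have [->|Bn] := eqVneq B 0; first by rewrite invr0 mulr0 mulr_ge0 // sumr_ge0.
have Bp : 0 < B by rewrite lt_def Bn.
rewrite ler_pdivrMr //.
have -> : \sum_(x : S) q x * f x * g x = \sum_(x : S) q x * f x * (g x - g x0).
  under [RHS]eq_bigr do rewrite mulrBr.
  by rewrite sumrB -mulr_suml f0 mul0r subr0.
apply: le_trans (ler_norm _) _.
apply: le_trans (ler_norm_sum _ _ _) _.
rewrite mulr_sumr mulr_suml; apply: ler_sum => x _.
rewrite !normrM (ger0_norm (ltW (q_pos x))).
have h1 := Hg x0 x.
have h2 := normr_ge0 (f x).
have h3 := normr_ge0 (g x - g x0).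
have h4 : `|f x| * `|g x - g x0| <= `|f x| * (M * B) by rewrite ler_wpM2l.
have h5 : q x * (`|f x| * `|g x - g x0|) <= `|f x| * `|g x - g x0|.
  by rewrite ler_piMl ?mulr_ge0 ?q1.
have e : M * `|f x| * B = `|f x| * (M * B) by ring.
rewrite e -mulrA; exact: le_trans h5 h4.
Qed.

End Poinc.

Section Lim.
Variables (R : realType) (S : finType) (Pi : S -> S -> R) (q : S -> R) (Phi : R -> R) (l : S -> R).
Hypothesis q_pos : forall y, 0 < q y.
Hypothesis q1 : forall y, q y <= 1.
Hypothesis thn : forall x y, 0 < kappa Pi x y -> 0 <= vartheta Phi l x y.
Variables (M : R) (x0 : S).
Hypothesis M0 : 0 <= M.
Hypothesis HM : forall g x y, `|g y - g x| <= M * Num.sqrt (Bf Pi q (vartheta Phi l) g g).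
Variables (L u : S -> R).
Hypothesis HL : forall g, \sum_(x : S) q x * L x * g x = Bf Pi q (vartheta Phi l) u g.

Let q_ge0 y : 0 <= q y. Proof. exact: ltW. Qed.

Lemma L_mean : \sum_(x : S) q x * L x = 0.
Proof.
have e := HL (fun _ => 1).
have b0 : Bf Pi q (vartheta Phi l) u (fun _ => 1) = 0.
  by rewrite /Bf big1 // => x _; rewrite big1 // => y _; rewrite /grad subrr !mulr0.
rewrite -[RHS]b0 -e; apply: eq_bigr => x _; by rewrite mulr1.
Qed.

Lemma ratio_lin (F G : S -> R) (c : R) g :
  (\sum_(x : S) q x * (c * (F x + G x)) * g x) / H1norm Pi q Phi l g =
  c * ((\sum_(x : S) q x * F x * g x) / H1norm Pi q Phi l g
     + (\sum_(x : S) q x * G x * g x) / H1norm Pi q Phi l g).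
Proof.
rewrite -mulrDl mulrA; congr (_ / _).
rewrite -big_split mulr_sumr; apply: eq_bigr => x _ /=; ring.
Qed.

Lemma Hm1_bounds h (D : S -> R) : 0 < h -> \sum_(x : S) q x * D x = 0 ->
  let E := fun x => h^-1 * D x - L x in
  ((h * (H1norm Pi q Phi l u - M * \sum_(x : S) `|E x|))%:E <= Hm1norm Pi q Phi l D)%E /\
  (Hm1norm Pi q Phi l D <= (h * (H1norm Pi q Phi l u + M * \sum_(x : S) `|E x|))%:E)%E.
Proof.
move=> hp D0 E.
have DE : D = (fun x => h * (L x + E x)).
  by apply: funext => x; rewrite /E addrC subrK mulrA mulfV ?gt_eqF // mul1r.
have E0 : \sum_(x : S) q x * E x = 0.
  rewrite /E; under eq_bigr do rewrite mulrBr.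
  rewrite sumrB L_mean subr0.
  under eq_bigr do rewrite mulrCA.
  by rewrite -mulr_sumr D0 mulr0.
have Eb g : (\sum_(x : S) q x * E x * g x) / H1norm Pi q Phi l g <= M * \sum_(x : S) `|E x|.
  rewrite /H1norm H1sqE.
  by apply: (@ratio_bound R S Pi q q_pos _ M E g x0 M0) => // x y; exact: HM.
split.
  rewrite /Hm1norm; apply: le_ereal_sup_tmp.
  eexists; first by exists u.
  rewrite /= lee_fin DE ratio_lin ler_wpM2l ?(ltW hp) //.
  have r1 : (\sum_(x : S) q x * L x * u x) / H1norm Pi q Phi l u = H1norm Pi q Phi l u.
    by rewrite /H1norm HL H1sqE ratio_self.
  rewrite r1 lerD2l.
  rewrite lerNl.
  have := @ratio_bound R S Pi q q_pos (vartheta Phi l) M (fun x => - E x) u x0 M0 (HM u) q1.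
  rewrite /H1norm H1sqE.
  have -> : \sum_(x : S) q x * - E x = 0 by rewrite (eq_bigr (fun x => - (q x * E x))) ?sumrN ?E0 ?oppr0 // => x _; rewrite mulrN.
  move=> /(_ erefl).
  have e1 : \sum_(x : S) q x * - E x * u x = - \sum_(x : S) q x * E x * u x.
    by rewrite -sumrN; apply: eq_bigr => x _; rewrite mulrN mulNr.
  have e2 : \sum_(x : S) `|- E x| = \sum_(x : S) `|E x|.
    by apply: eq_bigr => x _; rewrite normrN.
  by rewrite e1 e2 mulNr.
apply: ge_ereal_sup => _ [g _ <-]; rewrite lee_fin DE ratio_lin ler_wpM2l ?(ltW hp) //.
apply: lerD; last exact: Eb.
rewrite /H1norm HL !H1sqE; exact: ratio_le.
Qed.

Lemma lim_main (D : R -> S -> R) :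
  (\forall h \near 0^'+, \sum_(x : S) q x * D h x = 0) ->
  (forall x, (fun h => h^-1 * D h x) @ 0^'+ --> L x) ->
  (fun h : R => ((h^-1)%:E * Hm1norm Pi q Phi l (D h))%E) @ 0^'+
     --> (H1norm Pi q Phi l u)%:E.
Proof.
move=> Dm Dl.
set N := H1norm Pi q Phi l u.
pose E h x := h^-1 * D h x - L x.
have key : \forall h \near 0^'+, exists r, Hm1norm Pi q Phi l (D h) = r%:E /\
    `|N - h^-1 * r| <= M * \sum_(x : S) `|E h x|.
  near=> h.
  have hp : 0 < h by near: h; exact: nbhs_right_gt.
  have D0 : \sum_(x : S) q x * D h x = 0 by near: h; exact: Dm.
  have [] := @Hm1_bounds h (D h) hp D0.
  case: (Hm1norm Pi q Phi l (D h)) => [r| |] //=.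
  rewrite !lee_fin => lo up; exists r; split => //.
  have lo' : N - M * \sum_(x : S) `|E h x| <= h^-1 * r.
    by rewrite -(ler_pM2l hp) mulrA mulfV ?gt_eqF // mul1r.
  have up' : h^-1 * r <= N + M * \sum_(x : S) `|E h x|.
    by rewrite -(ler_pM2l hp) mulrA mulfV ?gt_eqF // mul1r.
  rewrite ler_norml; apply/andP; split; lra.
apply: cvg_EFin.
  by apply: filterS key => h [r [-> _]].
apply/cvgrPdist_le => e ep.
set c := M * #|S|%:R.
have c0 : 0 <= c by rewrite mulr_ge0.
set e' := e / (c + 1).
have e'p : 0 < e' by rewrite divr_gt0 // ltr_wpDl.
have all : \forall h \near 0^'+, forall x, `|L x - h^-1 * D h x| <= e'.
  apply: filter_forall => x; move/cvgrPdist_le: (Dl x); exact.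
near=> h.
have [r [e1 e2]] : exists r, Hm1norm Pi q Phi l (D h) = r%:E /\
    `|N - h^-1 * r| <= M * \sum_(x : S) `|E h x| by near: h; exact: key.
have al : forall x, `|L x - h^-1 * D h x| <= e' by near: h; exact: all.
rewrite /= e1 -EFinM /=.
apply: (le_trans e2).
have sb : \sum_(x : S) `|E h x| <= #|S|%:R * e'.
  apply: le_trans (_ : \sum_(x : S) e' <= _).
    by apply: ler_sum => x _; rewrite /E distrC; exact: al.
  by rewrite sumr_const mulr_natl.
apply: le_trans (_ : M * (#|S|%:R * e') <= _); first by rewrite ler_wpM2l.
rewrite mulrA -/c /e' mulrA ler_pdivrMr ?ltr_wpDl //.
have := ltW ep; lra.
Unshelve. all: by end_near.
Qed.

End Lim.

Lemma phi_deriv (R : realType) (Phi : R -> R) x :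
  derivable (phiP Phi) x 1 -> is_derive x 1 (phiP Phi) (Phi2 Phi x).
Proof. by move=> d; rewrite /Phi2 derive1E; exact: derivableP. Qed.

Lemma Theta_pos_lt (R : realType) (Phi : R -> R) a b :
  (forall x, 0 < x -> derivable (phiP Phi) x 1) ->
  (forall x, 0 < x -> 0 < Phi2 Phi x) -> 0 < a -> a < b ->
  exists2 c, 0 < c & phiP Phi b - phiP Phi a = Phi2 Phi c * (b - a).
Proof.
move=> dphi p2 a0 ab.
have h1 : forall x, x \in `]a, b[ -> is_derive x 1 (phiP Phi) (Phi2 Phi x).
  move=> x; rewrite in_itv /= => /andP[ax _]; apply: phi_deriv; apply: dphi.
  exact: lt_trans a0 ax.
have h2 : {within `[a, b], continuous (phiP Phi)}.
  apply: derivable_within_continuous => x; rewrite in_itv /= => /andP[ax _].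
  apply: dphi; exact: lt_le_trans a0 ax.
have [c cab e] := @MVT R (phiP Phi) (Phi2 Phi) a b ab h1 h2.
exists c => //; move: cab; rewrite in_itv /= => /andP[ac _]; exact: lt_trans a0 ac.
Qed.

Lemma Theta_pos (R : realType) (Phi : R -> R) a b :
  (forall x, 0 < x -> derivable (phiP Phi) x 1) ->
  (forall x, 0 < x -> 0 < Phi2 Phi x) -> 0 < a -> 0 < b ->
  0 < ThetaP Phi a b.
Proof.
move=> dphi p2 a0 b0; rewrite /ThetaP.
case: (eqVneq a b) => [_|nab]; first by rewrite invr_gt0 p2.
case: (ltgtP a b) nab => // ab _.
  have [c c0 e] := @Theta_pos_lt R Phi a b dphi p2 a0 ab.
  have -> : phiP Phi a - phiP Phi b = Phi2 Phi c * (a - b).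
    by rewrite -opprB e -mulrN opprB.
  rewrite invfM mulrCA mulfV ?mulr1 ?invr_gt0 ?p2 //.
  by rewrite subr_eq0 lt_eqF.
have [c c0 e] := @Theta_pos_lt R Phi b a dphi p2 b0 ab.
rewrite e invfM mulrCA mulfV ?mulr1 ?invr_gt0 ?p2 //.
by rewrite subr_eq0 gt_eqF.
Qed.

Lemma q_positive (R : realType) (S : finType) (Pi : S -> S -> R) (q : S -> R) :
  (forall x y, 0 <= Pi x y) ->
  (forall x y, connect (fun a b => 0 < Pi a b) x y) ->
  (forall y, 0 <= q y) -> \sum_(y : S) q y = 1 ->
  (forall y, \sum_(x : S) q x * Pi x y = q y) -> forall y, 0 < q y.
Proof.
move=> P0 irr q0 q1 inv.
have step x z : q z = 0 -> 0 < Pi x z -> q x = 0.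
  move=> qz pxz.
  have : \sum_(x : S) q x * Pi x z = 0 by rewrite inv.
  move/psumr_eq0P => /(_ (fun i _ => mulr_ge0 (q0 i) (P0 i z))) /(_ x erefl) /eqP.
  by rewrite mulf_eq0 (gt_eqF pxz) orbF => /eqP.
have pth s x : path (fun a b => 0 < Pi a b) x s -> q (last x s) = 0 -> q x = 0.
  elim: s x => [|z s IH] x //= /andP[e ps] ql.
  exact: step (IH z ps ql) e.
move=> y; rewrite lt_def q0 andbT; apply/eqP => qy.
have all x : q x = 0.
  have /connectP [s ps ey] := irr x y.
  by apply: pth ps _; rewrite -ey.
move: q1; rewrite big1 // => /esym /eqP; by rewrite oner_eq0.
Qed.

Lemma extr (R : realType) (T : R) (P : R -> Prop) :
  (\forall s \near T^'+, P s) -> exists2 d, 0 < d & forall s, T < s <= T + d -> P s.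
Proof.
move=> H; rewrite near_withinE in H.
move/nbhs_ballP: H => [e /= e0 He].
exists (e / 2); first by rewrite divr_gt0.
move=> s /andP[Ts sTd]; apply: He => //.
rewrite /ball /= ltr_norml; apply/andP; split; lra.
Qed.

Lemma p_positive (R : realType) (S : finType) (Pi : S -> S -> R) (p : R -> S -> R) (t0 : R) :
  (forall x y, 0 <= Pi x y) ->
  (forall y, 0 < p 0 y) ->
  (forall y, (fun s => p s y) @ 0^'+ --> p 0 y) ->
  (forall (t : R) (y : S), 0 < t ->
     is_derive t 1 (fun s => p s y) (\sum_(x : S) p t x * kappa Pi x y)) ->
  0 < t0 -> forall y, 0 < p t0 y.
Proof.
move=> P0 p0 pc pd t0p.
have cont t y : 0 < t -> {for t, continuous (fun s => p s y)}.
  move=> tp; apply: differentiable_continuous; apply/derivable1_diffP.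
  by have [] := pd t y tp.
pose A := [set t | 0 <= t <= t0 /\ forall s y, 0 <= s <= t -> 0 < p s y].
have A0 : A 0.
  split; first by rewrite lexx ltW.
  by move=> s y; rewrite -eq_le => /eqP <-.
have hs : has_sup A.
  split; first by exists 0.
  by exists t0 => t [/andP[_ ->]].
set T := sup A.
have T0 : 0 <= T by exact: sup_upper_bound hs _ A0.
have Tt0 : T <= t0 by apply: ge_sup; [exists 0 | move=> t [/andP[_ ->]]].
have below s y : 0 <= s < T -> 0 < p s y.
  move=> /andP[s0 sT].
  have e0 : 0 < T - s by rewrite subr_gt0.
  have [a [_ Ha] sa] := sup_adherent e0 hs.
  apply: Ha; rewrite s0 /=; move: sa; rewrite -/T opprB addrCA subrr addr0 => /ltW //.
have atT y : 0 < p T y.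
  case: (eqVneq T 0) => [->|Tn0]; first exact: p0.
  have Tp : 0 < T by rewrite lt_def Tn0 T0.
  pose u := (fun s => expR s * p s y).
  pose du := (fun s => expR s * (\sum_(x : S) p s x * kappa Pi x y) + p s y * expR s).
  have T2 : T / 2 < T by rewrite ltr_pdivrMr // ltr_pMr // ltr1n.
  have T20 : 0 < T / 2 by rewrite divr_gt0.
  have h1 : forall s, s \in `]T / 2, T[ -> is_derive s 1 u (du s).
    move=> s; rewrite in_itv /= => /andP[s1 _].
    have sp : 0 < s := lt_trans T20 s1.
    have := @is_deriveM R R expR (fun s => p s y) s 1 (expR s) (\sum_(x : S) p s x * kappa Pi x y) (is_derive_expR s) (pd s y sp).
    by [].
  have h2 : {within `[T / 2, T], continuous u}.
    apply: derivable_within_continuous => s; rewrite in_itv /= => /andP[s1 _].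
    have sp : 0 < s := lt_le_trans T20 s1.
    apply: derivableM; first exact: derivable_expR.
    by have [] := pd s y sp.
  have [c cT e] := @MVT R u du (T / 2) T T2 h1 h2.
  move: cT; rewrite in_itv /= => /andP[c1 c2].
  have cp : 0 < c := lt_trans T20 c1.
  have duc : 0 <= du c.
    have -> : du c = expR c * \sum_(x : S) p c x * Pi x y.
      rewrite /du /kappa (bigD1 y) //= [in RHS](bigD1 y) //= eqxx mulr1n.
      rewrite mulrDr mulrDr.
      have -> : \sum_(i | i != y) p c i * (Pi i y - (i == y)%:R) = \sum_(i | i != y) p c i * Pi i y.
        by apply: eq_bigr => i /negbTE ->; rewrite subr0.
      ring.
    apply: mulr_ge0; first exact: ltW (expR_gt0 c).
    apply: sumr_ge0 => x _; apply: mulr_ge0 => //; apply: ltW; apply: below.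
    by rewrite (ltW cp) c2.
  have uT2 : 0 < u (T / 2).
    rewrite /u mulr_gt0 ?expR_gt0 //; apply: below; by rewrite (ltW T20) T2.
  have : 0 < u T.
    have : u (T / 2) <= u T.
      by rewrite -subr_ge0 e mulr_ge0 // subr_ge0 ltW.
    exact: lt_le_trans uT2.
  by rewrite /u pmulr_rgt0 ?expR_gt0.
have Tt : T = t0.
  apply/eqP; rewrite eq_le Tt0 /=; rewrite leNgt; apply/negP => Tlt.
  have right : \forall s \near T^'+, forall y, 0 < p s y.
    apply: filter_forall => y.
    have cv : (fun s => p s y) @ T^'+ --> p T y.
      case: (eqVneq T 0) => [T00|Tn0]; first by rewrite T00; exact: pc.
      apply: cvg_at_right_filter; apply: cont.
      by rewrite lt_def Tn0 T0.
    exact: cvgr_gt cv _ (atT y).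
  have [d dp Hd] := @extr R T _ right.
  pose T' := Num.min (T + d) t0.
  have T'A : A T'.
    split.
      by rewrite /T' le_min ge_min lexx orbT andbT (addr_ge0 T0 (ltW dp)) (ltW t0p).
    move=> s y /andP[s0 sT'].
    case: (ltgtP s T) => [sT|Ts|->]; [apply: below; rewrite s0 sT // | | exact: atT].
    apply: (Hd s); rewrite Ts /=; apply: le_trans sT' _; by rewrite ge_min lexx.
  have : T' <= T by exact: sup_upper_bound hs _ T'A.
  rewrite /T' ge_min leNgt ltrDl dp /= leNgt Tlt //.
by rewrite -Tt; exact: atT.
Qed.
Lemma cvg_sumS (R : realType) (S : finType) (T : Type) (F : set_system T) (FF : Filter F)
  (f : S -> T -> R) (a : S -> R) :
  (forall y, f y @ F --> a y) -> (fun x => \sum_(y : S) f y x) @ F --> \sum_(y : S) a y.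
Proof.
move=> H; have := @cvg_big _ _ +%R 0 predT _ T F (index_enum S) f a FF. move=> /(_ (@add_continuous R)) /(_ (fun i _ => H i)); exact.
Qed.

Lemma is_derive_sumS (R : realType) (S : finType) (s : seq S) (f : S -> R -> R) (df : S -> R) (t : R) :
  (forall y, is_derive t (1:R) (f y) (df y)) ->
  is_derive t (1:R) (fun u => \sum_(y <- s) f y u) (\sum_(y <- s) df y).
Proof.
move=> H; elim: s => [|i s IH].
  have -> : (fun u : R => \sum_(y <- [::]) f y u) = cst 0.
    by apply: funext => u; rewrite big_nil.
  rewrite big_nil; exact: is_derive_cst.
have -> : (fun u => \sum_(y <- i :: s) f y u) = f i + (fun u => \sum_(y <- s) f y u).
  by apply: funext => u; rewrite big_cons.
rewrite big_cons; exact: is_deriveD.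
Qed.

Lemma const_zero (R : realType) (d : R) (phi : R -> R) (c : R) :
  (\forall h \near (0:R)^'+, d = h * phi h) -> phi @ (0:R)^'+ --> c -> d = 0.
Proof.
move=> Hd Hphi; apply/eqP/negPn/negP => dn0.
have ep : 0 < `|d| / (`|c| + 1) by rewrite divr_gt0 ?normr_gt0 // ltr_wpDl.
have ab : \forall h \near (0:R)^'+, `|c - phi h| <= 1 by move/cvgrPdist_le : Hphi; apply.
near (0:R)^'+ => h.
have e1 : d = h * phi h by near: h; exact: Hd.
have e2 : `|c - phi h| <= 1 by near: h; exact: ab.
have h0 : 0 < h by near: h; exact: nbhs_right_gt.
have h1 : h < `|d| / (`|c| + 1) by near: h; exact: nbhs_right_lt.
have : `|d| < `|d|.
  rewrite {1}e1 normrM (gtr0_norm h0).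
  have pb : `|phi h| <= `|c| + 1.
    have := ler_normB c (c - phi h); rewrite subKr => hh.
    apply: le_trans hh _; rewrite lerD2l //.
  have hp : h * `|phi h| <= h * (`|c| + 1) by rewrite ler_pM2l.
  apply: le_lt_trans hp _.
  by rewrite -ltr_pdivlMr ?ltr_wpDl.
by rewrite ltxx.
Unshelve. all: by end_near.
Qed.

Lemma mean_const (R : realType) (S : finType) (w : S -> R) (f V : R -> S -> R) (L : S -> R) (t0 eps : R) :
  (forall t y, t0 < t < t0 + eps -> is_derive t (1:R) (fun s => f s y) (V t y)) ->
  (forall t, t0 < t < t0 + eps -> \sum_(y : S) w y * V t y = 0) ->
  (forall y, (fun h => h^-1 * (f (t0 + h) y - f t0 y)) @ (0:R)^'+ --> L y) ->
  forall h, 0 < h < eps -> \sum_(y : S) w y * (f (t0 + h) y - f t0 y) = 0.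
Proof.
move=> fd V0 fl h /andP[h0 he].
pose m t := \sum_(y : S) w y * f t y.
have md t : t0 < t < t0 + eps -> is_derive t (1:R) m (\sum_(y : S) w y * V t y).
  move=> tt; apply: is_derive_sumS => y.
  exact: is_deriveZ (fd t y tt).
have eq1 h' : 0 < h' < h -> m (t0 + h) = m (t0 + h').
  move=> /andP[h'0 h'h].
  have lt : t0 + h' < t0 + h by rewrite ltrD2l.
  have h1 : forall x, x \in `]t0 + h', t0 + h[ -> is_derive x (1:R) m (\sum_(y : S) w y * V x y).
    move=> x; rewrite in_itv /= => /andP[x1 x2]; apply: md.
    apply/andP; split; first by apply: lt_trans x1; rewrite ltrDl.
    by apply: lt_trans x2 _; rewrite ltrD2l.
  have h2 : {within `[t0 + h', t0 + h], continuous m}.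
    apply: derivable_within_continuous => x; rewrite in_itv /= => /andP[x1 x2].
    have [] // := md x; apply/andP; split.
      by apply: lt_le_trans x1; rewrite ltrDl.
    by apply: le_lt_trans x2 _; rewrite ltrD2l.
  have [c cI e] := MVT lt h1 h2.
  apply/eqP; rewrite -subr_eq0 e V0 ?mul0r //.
  move: cI; rewrite in_itv /= => /andP[c1 c2]; apply/andP; split.
    by apply: lt_trans c1; rewrite ltrDl.
  by apply: lt_trans c2 _; rewrite ltrD2l.
have -> : \sum_(y : S) w y * (f (t0 + h) y - f t0 y) = m (t0 + h) - m t0.
  by rewrite /m -sumrB; apply: eq_bigr => y _; rewrite mulrBr.
apply: (@const_zero R _ (fun h' => \sum_(y : S) w y * (h'^-1 * (f (t0 + h') y - f t0 y)))
          (\sum_(y : S) w y * L y)).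
  near=> h'.
  have h'0 : 0 < h' by near: h'; exact: nbhs_right_gt.
  have h'h : h' < h by near: h'; exact: nbhs_right_lt.
  rewrite (eq1 h'); last by rewrite h'0 h'h.
  rewrite mulr_sumr /m -sumrB; apply: eq_bigr => y _.
  by rewrite mulrCA mulVKf ?gt_eqF // mulrBr.
apply: cvg_sumS => y; apply: cvgM; [exact: cvg_cst | exact: fl].
Unshelve. all: by end_near.
Qed.
Lemma Theta_sym (R : realType) (Phi : R -> R) a b : ThetaP Phi a b = ThetaP Phi b a.
Proof.
rewrite /ThetaP eq_sym; case: (eqVneq b a) => [->//|_].
by rewrite -[in RHS](opprB a b) -[in RHS](opprB (phiP Phi a)) invrN mulrNN.
Qed.

Section Ident.
Variables (R : realType) (S : finType) (Pi : S -> S -> R) (q : S -> R).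
Hypothesis Pi_sum : forall x, \sum_(y : S) Pi x y = 1.
Hypothesis db : forall y z, q y * kappa Pi y z = q z * kappa Pi z y.

Lemma divg_sum0 F : \sum_(x : S) q x * divg Pi F x = 0.
Proof.
pose G x y := q x * kappa Pi x y * (F x y - F y x).
have Ga x y : G y x = - G x y by rewrite /G db; ring.
have -> : \sum_(x : S) q x * divg Pi F x = 2^-1 * \sum_(x : S) \sum_(y : S) G x y.
  rewrite mulr_sumr; apply: eq_bigr => x _; rewrite /divg mulrCA; congr (_ * _).
  rewrite mulr_sumr [RHS](bigD1 x) //= /G subrr mulr0 add0r.
  by apply: eq_bigr => y _; rewrite mulrA.
have : \sum_(x : S) \sum_(y : S) G x y = - \sum_(x : S) \sum_(y : S) G x y.
  rewrite [LHS]exchange_big /= -sumrN; apply: eq_bigr => x _; rewrite -sumrN.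
  by apply: eq_bigr => y _; rewrite Ga.
set X := \sum_(x : S) _ => e.
have : X = 0 by move: e; lra.
by move=> ->; rewrite mulr0.
Qed.

Lemma divg_form th psi x : (forall a b, th a b = th b a) ->
  divg Pi (fun a b => th a b * grad psi a b) x
  = \sum_(y : S) kappa Pi x y * (th x y * grad psi x y).
Proof.
move=> ths; rewrite /divg [RHS](bigD1 x) //= [grad psi x x]/grad subrr !mulr0 add0r.
rewrite mulr_sumr; apply: eq_bigr => y _.
by rewrite ths /grad; field.
Qed.

Lemma Kop_form Phi l x :
  (forall a b, l a != l b -> phiP Phi (l a) != phiP Phi (l b)) ->
  Kop Pi l x = \sum_(y : S) kappa Pi x y *
      (vartheta Phi l x y * grad (fun z => phiP Phi (l z)) x y).
Proof.
move=> inj.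
have ks : \sum_(y : S) kappa Pi x y = 0.
  rewrite /kappa sumrB Pi_sum (bigD1 x) //= eqxx big1 ?addr0 ?subrr //.
  by move=> y; rewrite eq_sym => /negbTE ->.
have -> : Kop Pi l x = \sum_(y : S) kappa Pi x y * (l y - l x).
  under [RHS]eq_bigr do rewrite mulrBr.
  by rewrite sumrB -mulr_suml ks mul0r subr0.
apply: eq_bigr => y _; congr (_ * _).
rewrite /vartheta /ThetaP /grad.
case: (eqVneq (l x) (l y)) => [->|ne]; first by rewrite !subrr mulr0.
have := inj _ _ ne; rewrite -subr_eq0 => ne'.
by field.
Qed.

Lemma Bf_oppl th u g : Bf Pi q th (fun z => - u z) g = - Bf Pi q th u g.
Proof.
rewrite /Bf -sumrN; apply: eq_bigr => x _; rewrite -sumrN; apply: eq_bigr => y _.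
rewrite /grad; ring.
Qed.

Lemma Bf_opp2 th u : Bf Pi q th (fun z => - u z) (fun z => - u z) = Bf Pi q th u u.
Proof.
rewrite /Bf; apply: eq_bigr => x _; apply: eq_bigr => y _; rewrite /grad; ring.
Qed.

End Ident.
Lemma dlim (R : realType) (f : R -> R) (a d : R) :
  is_derive a 1 f d -> (fun h => h^-1 * (f (a + h) - f a)) @ 0^'+ --> d.
Proof.
move=> [Hd <-].
apply: cvg_dnbhs_at_right.
have -> : (fun h => h^-1 * (f (a + h) - f a)) = (fun h => h^-1 *: ((f \o shift a) h%:A - f a)).
  apply: funext => h /=; rewrite [in RHS]/GRing.scale/= !mulr1 (addrC h) //.
exact: Hd.
Qed.

Theorem proposition8p5 (R : realType) (S : finType)
  (Pi : S -> S -> R) (q : S -> R) (Phi : R -> R)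
  (p : R -> S -> R) (t0 eps : R) (psi lpsi : R -> S -> R) :
  (* Pi irreducible stochastic *)
  (forall x y, 0 <= Pi x y) ->
  (forall x, \sum_(y : S) Pi x y = 1) ->
  (forall x y, connect (fun a b => 0 < Pi a b) x y) ->
  (* q invariant distribution *)
  (forall y, 0 <= q y) -> \sum_(y : S) q y = 1 ->
  (forall y, \sum_(x : S) q x * Pi x y = q y) ->
  (* detailed balance *)
  (forall y z, q y * kappa Pi y z = q z * kappa Pi z y) ->
  (* Phi on (0,oo): convex, C^1, with continuous positive second derivative *)
  (forall x y (s : R), 0 < x -> 0 < y -> 0 <= s <= 1 ->
     Phi (s * x + (1 - s) * y) <= s * Phi x + (1 - s) * Phi y) ->
  (forall x, 0 < x -> derivable Phi x 1) ->
  (forall x, 0 < x -> derivable (phiP Phi) x 1) ->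
  (forall x, 0 < x -> {for x, continuous (Phi2 Phi)}) ->
  (forall x, 0 < x -> 0 < Phi2 Phi x) ->
  Phi 1 = 0 ->
  (* p(t,.) = law at time t of the chain with generator K, positive initial law *)
  (forall y, 0 < p 0 y) -> \sum_(y : S) p 0 y = 1 ->
  (forall y, (fun s => p s y) @ 0^'+ --> p 0 y) ->
  (forall (t : R) (y : S), 0 < t ->
     is_derive t 1 (fun s => p s y) (\sum_(x : S) p t x * kappa Pi x y)) ->
  (* the curve (lpsi_t) driven by psi_t on [t0, t0+eps) *)
  0 < t0 -> 0 < eps ->
  (forall y, {within `[t0, t0 + eps[, continuous (fun t => psi t y)}) ->
  (forall (t : R) (y : S), t0 <= t < t0 + eps -> 0 < lpsi t y) ->
  (forall y, lpsi t0 y = p t0 y / q y) ->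
  (forall y, (fun h => h^-1 * (lpsi (t0 + h) y - lpsi t0 y)) @ 0^'+ -->
     - divg Pi (fun a b => vartheta Phi (fun z => p t0 z / q z) a b
                            * grad (psi t0) a b) y) ->
  (forall (t : R) (y : S), t0 < t < t0 + eps ->
     is_derive t 1 (fun s => lpsi s y)
       (- divg Pi (fun a b => vartheta Phi (fun z => p t z / q z) a b
                               * grad (psi t) a b) y)) ->
  let ell := fun t z => p t z / q z in
  let l := ell t0 in
  ((fun h : R => ((h^-1)%:E * Hm1norm Pi q Phi l (fun z => (ell (t0 + h) z - ell t0 z)%R))%E)
     @ 0^'+ --> Hm1norm Pi q Phi l (Kop Pi (ell t0)))
  /\ Hm1norm Pi q Phi l (Kop Pi (ell t0))
     = (H1norm Pi q Phi l (fun z => phiP Phi (ell t0 z)))%:E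
  /\ ((fun h : R => ((h^-1)%:E * Hm1norm Pi q Phi l (fun z => (lpsi (t0 + h) z - lpsi t0 z)%R))%E)
     @ 0^'+ --> Hm1norm Pi q Phi l
                  (divg Pi (fun a b => vartheta Phi (ell t0) a b * grad (psi t0) a b)))
  /\ Hm1norm Pi q Phi l
       (divg Pi (fun a b => vartheta Phi (ell t0) a b * grad (psi t0) a b))
     = (H1norm Pi q Phi l (psi t0))%:E.
Proof.
move=> Pi0 Pis irr q0 qsum qinv db _ _ dphi _ p2pos _ p0 _ pc pd t0p epsp _ _ lpsi0 lpsil lpsid ell l.
have qpos := @q_positive _ _ _ _ Pi0 irr q0 qsum qinv.
have q1 y : q y <= 1 by rewrite -qsum; exact: le_sum_all.
have x0 : S.
  case: (pickP (@predT S)) => [x _|H]; first exact x.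
  exfalso; move: qsum; rewrite big_pred0 // => /esym/eqP; by rewrite oner_eq0.
have ppos := @p_positive _ _ _ _ _ Pi0 p0 pc pd t0p.
have lpos y : 0 < l y by rewrite /l /ell divr_gt0.
have thpos x y : 0 < vartheta Phi l x y by exact: (@Theta_pos _ _ _ _ dphi p2pos (lpos x) (lpos y)).
have thnn x y : 0 < kappa Pi x y -> 0 <= vartheta Phi l x y by move=> _; exact: ltW.
have ths a b : vartheta Phi l a b = vartheta Phi l b a by rewrite /vartheta Theta_sym.
have inj a b : l a != l b -> phiP Phi (l a) != phiP Phi (l b).
  move=> ne; case: (ltgtP (l a) (l b)) ne => // lt _.
    have [c c0 e] := @Theta_pos_lt _ _ _ _ dphi p2pos (lpos a) lt.
    by rewrite eq_sym -subr_eq0 e mulf_neq0 ?gt_eqF ?p2pos // subr_gt0.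
  have [c c0 e] := @Theta_pos_lt _ _ _ _ dphi p2pos (lpos b) lt.
  by rewrite -subr_eq0 e mulf_neq0 ?gt_eqF ?p2pos // subr_gt0.
have [M M0 HM] := @poinc _ _ _ _ qpos irr _ (fun x y _ => thpos x y).
have HK g : \sum_(x : S) q x * Kop Pi l x * g x
    = Bf Pi q (vartheta Phi l) (fun z => - phiP Phi (l z)) g.
  rewrite Bf_oppl -(@key _ _ _ _ Pi0 db _ _ g ths).
  apply: eq_bigr => x _; by rewrite (@Kop_form _ _ _ Pis _ _ x inj) mulrAC.
have Hdiv g : \sum_(x : S) q x * (- divg Pi (fun a b => vartheta Phi l a b * grad (psi t0) a b) x) * g x
    = Bf Pi q (vartheta Phi l) (psi t0) g.
  rewrite -[RHS]opprK -(@key _ _ _ _ Pi0 db _ _ g ths) -sumrN.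
  apply: eq_bigr => x _; rewrite (@divg_form _ _ _ _ _ x ths); ring.
have HdivP g : \sum_(x : S) q x * divg Pi (fun a b => vartheta Phi l a b * grad (psi t0) a b) x * g x
    = Bf Pi q (vartheta Phi l) (fun z => - psi t0 z) g.
  rewrite Bf_oppl -(@key _ _ _ _ Pi0 db _ _ g ths).
  apply: eq_bigr => x _; by rewrite (@divg_form _ _ _ _ _ x ths) mulrAC.
have H1opp u : H1norm Pi q Phi l (fun z => - u z) = H1norm Pi q Phi l u.
  by rewrite /H1norm !H1sqE Bf_opp2.
have C2 : Hm1norm Pi q Phi l (Kop Pi (ell t0))
    = (H1norm Pi q Phi l (fun z => phiP Phi (ell t0 z)))%:E.
  by rewrite (@Hm1_eq _ _ _ _ q0 _ _ _ (fun z => - phiP Phi (l z)) thnn HK) H1opp.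
have C4 : Hm1norm Pi q Phi l (divg Pi (fun a b => vartheta Phi (ell t0) a b * grad (psi t0) a b))
    = (H1norm Pi q Phi l (psi t0))%:E.
  by rewrite (@Hm1_eq _ _ _ _ q0 _ _ _ (fun z => - psi t0 z) thnn HdivP) H1opp.
have C1 : (fun h : R => ((h^-1)%:E * Hm1norm Pi q Phi l (fun z => (ell (t0 + h) z - ell t0 z)%R))%E)
     @ 0^'+ --> Hm1norm Pi q Phi l (Kop Pi (ell t0)).
  rewrite (@Hm1_eq _ _ _ _ q0 _ _ _ (fun z => - phiP Phi (l z)) thnn HK).
  apply: (@lim_main _ _ _ _ _ _ qpos q1 thnn M x0 M0 HM (Kop Pi l) _ HK).
    near=> h.
    have h0 : 0 < h by near: h; exact: nbhs_right_gt.
    have h1 : h < 1 by near: h; apply: nbhs_right_lt; exact: ltr01.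
    have m1 : forall t y, t0 < t < t0 + 1 ->
        is_derive t (1:R) (fun s => p s y) (\sum_(x : S) p t x * kappa Pi x y).
      move=> t y /andP[tt _]; apply: pd; exact: lt_trans t0p tt.
    have m2 : forall t, t0 < t < t0 + 1 ->
        \sum_(y : S) (fun _ => 1) y * (\sum_(x : S) p t x * kappa Pi x y) = 0.
      move=> t _; under eq_bigr do rewrite mul1r.
      rewrite exchange_big /= big1 // => x _.
      by rewrite -mulr_sumr (@kappa_sum _ _ _ Pis x) mulr0.
    have m3 : forall y, (fun h => h^-1 * (p (t0 + h) y - p t0 y)) @ (0:R)^'+ -->
        \sum_(x : S) p t0 x * kappa Pi x y.
      move=> y; exact: (@dlim _ _ _ _ (pd t0 y t0p)).
    have e := @mean_const R S (fun _ => 1) p (fun t y => \sum_(x : S) p t x * kappa Pi x y)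
      (fun y => \sum_(x : S) p t0 x * kappa Pi x y) t0 1 m1 m2 m3 h.
    rewrite h0 h1 in e; have {}e := e erefl.
    rewrite -[RHS]e; apply: eq_bigr => x _; rewrite /ell mul1r.
    have := qpos x; rewrite lt0r => /andP[qn _]; by field.
  move=> x.
  have -> : (fun h => h^-1 * (fun z => ell (t0 + h) z - ell t0 z) x)
      = (fun h => (h^-1 * (p (t0 + h) x - p t0 x)) * (q x)^-1).
    by apply: funext => h; rewrite /ell /= -mulrBl mulrA.
  have -> : Kop Pi l x = (\sum_(y : S) p t0 y * kappa Pi y x) * (q x)^-1.
    rewrite /Kop mulr_suml; apply: eq_bigr => y _.
    have qx := qpos x; have qy := qpos y.
    have e : kappa Pi y x = q x * kappa Pi x y / q y.
      by rewrite -db mulrAC mulfV ?mul1r ?gt_eqF.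
    rewrite e /l /ell; field; rewrite ?gt_eqF //.
  apply: cvgMr_tmp; exact: (@dlim _ _ _ _ (pd t0 x t0p)).
have C3 : (fun h : R => ((h^-1)%:E * Hm1norm Pi q Phi l (fun z => (lpsi (t0 + h) z - lpsi t0 z)%R))%E)
     @ 0^'+ --> Hm1norm Pi q Phi l
                  (divg Pi (fun a b => vartheta Phi (ell t0) a b * grad (psi t0) a b)).
  rewrite C4.
  apply: (@lim_main _ _ _ _ _ _ qpos q1 thnn M x0 M0 HM
     (fun y => - divg Pi (fun a b => vartheta Phi l a b * grad (psi t0) a b) y) (psi t0) Hdiv).
    near=> h.
    have h0 : 0 < h by near: h; exact: nbhs_right_gt.
    have h1 : h < eps by near: h; apply: nbhs_right_lt; exact: epsp.
    have m2 : forall t, t0 < t < t0 + eps -> \sum_(y : S) q y *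
        (- divg Pi (fun a b => vartheta Phi (fun z => p t z / q z) a b * grad (psi t) a b) y) = 0.
      move=> t _; under eq_bigr do rewrite mulrN.
      by rewrite sumrN (@divg_sum0 _ _ _ _ db) oppr0.
    have e := @mean_const R S q lpsi
      (fun t y => - divg Pi (fun a b => vartheta Phi (fun z => p t z / q z) a b * grad (psi t) a b) y)
      (fun y => - divg Pi (fun a b => vartheta Phi l a b * grad (psi t0) a b) y) t0 eps lpsid m2 lpsil h.
    rewrite h0 h1 in e; exact: e.
  exact: lpsil.
split; first exact: C1.
split; first exact: C2.
split; first exact: C3.
exact: C4.
Unshelve. all: by end_near.
Qed.
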